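(* Suppose $S\subseteq\mathbb{N}^{\mathbb{N}}$ is defined by a sentence $\forall x\,\exists y\,\phi$ of $\mathscr{L}_{\max}$, where $\phi$ is quantifier-free. If $S$ is countable, then $S$ is guessable.
   Context: A function $G:\mathbb{N}^{<\mathbb{N}}\to\{0,1\}$ ($\mathbb{N}^{<\mathbb{N}}$ = finite sequences of naturals) is a guesser for $S\subseteq\mathbb{N}^{\mathbb{N}}$ if for every $f:\mathbb{N}\to\mathbb{N}$ there is $m>0$ such that for all $n>m$, $G(f(0),\ldots,f(n))$ equals $1$ if $f\in S$ and $0$ if $f\notin S$; $S$ is guessable if it has a guesser. The language $\mathscr{L}_{\max}$ is a first-order language extended with ellipses: constant symbols $\mathbf{n}$ (also $\bar n$) for each $n\in\mathbb{N}$; an $n$-ary function symbol $\tilde w$ for each $w:\mathbb{N}^n\to\mathbb{N}$ ($n>0$); an $n$-ary predicate symbol $\tilde p$ for each $p\subseteq\mathbb{N}^n$ ($n>0$); an $\mathbb{N}^{<\mathbb{N}}$-ary function symbol $\tilde G$ for each $G:\mathbb{N}^{<\mathbb{N}}\to\mathbb{N}$ (applicable to any finite number of arguments); a unary function symbol $\mathbf{f}$; and a symbol $\cdots_x$ for each variable $x$. Besides the usual terms, for $\mathbb{N}^{<\mathbb{N}}$-ary $G$, terms $u,v$ and variable $x$, $G(u(\mathbf{0}),\cdots_x,u(v))$ is a term with free variables $(FV(u)\setminus\{x\})\cup FV(v)$. Formulas are built as usual. For $f:\mathbb{N}\to\mathbb{N}$, $\mathscr{M}_f$ is the structure on $\mathbb{N}$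 interpreting every symbol as the object it names and $\mathbf{f}$ as $f$; terms are evaluated as usual, plus $G(u(\mathbf{0}),\cdots_x,u(v))^{s}=G\big(u(x|\mathbf{0})^{s},\ldots,u(x|\overline{v^{s}})^{s}\big)$ under an assignment $s$, where $u(x|c)$ is substitution of the constant $c$ for $x$ in $u$. A sentence $\phi$ defines $S\subseteq\mathbb{N}^{\mathbb{N}}$ if for every $f:\mathbb{N}\to\mathbb{N}$, $\mathscr{M}_f\models\phi$ iff $f\in S$. *)

(* Defs.v *)
From Stdlib Require Import List Arith.
Import ListNotations.

Definition var := nat.
Definition assignment := var -> nat.
Definition upd (s : assignment) (x : var) (c : nat) : assignment :=
  fun z => if Nat.eqb z x then c else s z.

(* A tuple of k argument terms is given as a function
   [args : nat -> term] of which only the indices [0 .. k-1] are used.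
   Finitary function symbols of arity n+1 (>0) are named by the function
   [w : list nat -> nat] restricted to lists of length n+1. *)
Inductive term : Type :=
| TVar   : var -> term
| TConst : nat -> term
| TFun   : forall (n : nat), (list nat -> nat) -> (nat -> term) -> term
| TG     : (list nat -> nat) -> forall (k : nat), (nat -> term) -> term
| Tf     : term -> term
| TEll   : (list nat -> nat) -> term -> var -> term -> term.
                                  (* TEll G u x v = G(u(0), ..._x, u(v)) *)

Inductive formula : Type :=
| FEq   : term -> term -> formula
| FPred : forall (n : nat), (list nat -> Prop) -> (nat -> term) -> formula
                                         (* p~(t_0,...,t_n), p subset of N^(n+1) *)
| FFalse : formula
| FNot  : formula -> formula
| FAnd  : formula -> formula -> formula
| FOr   : formula -> formula -> formula
| FImp  : formula -> formula -> formula
| FAll  : var -> formula -> formula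
| FEx   : var -> formula -> formula.

(* G(u(0),...,_x,u(v))^s = G(u(x|0)^s, ..., u(x|v^s)^s); the value of the
   substituted term u(x|c) under s is the value of u under s[x:=c]. *)
Fixpoint eval (f : nat -> nat) (s : assignment) (t : term) : nat :=
  match t with
  | TVar x => s x
  | TConst n => n
  | TFun n w args => w (map (fun i => eval f s (args i)) (seq 0 (S n)))
  | TG G k args => G (map (fun i => eval f s (args i)) (seq 0 k))
  | Tf t1 => f (eval f s t1)
  | TEll G u x v =>
      G (map (fun i => eval f (upd s x i) u) (seq 0 (S (eval f s v))))
  end.

Fixpoint sat (f : nat -> nat) (s : assignment) (phi : formula) : Prop :=
  match phi with
  | FEq t1 t2 => eval f s t1 = eval f s t2
  | FPred n p args => p (map (fun i => eval f s (args i)) (seq 0 (S n)))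
  | FFalse => False
  | FNot a => ~ sat f s a
  | FAnd a b => sat f s a /\ sat f s b
  | FOr a b => sat f s a \/ sat f s b
  | FImp a b => sat f s a -> sat f s b
  | FAll x a => forall c : nat, sat f (upd s x c) a
  | FEx x a => exists c : nat, sat f (upd s x c) a
  end.

Fixpoint free_in_term (z : var) (t : term) : Prop :=
  match t with
  | TVar x => z = x
  | TConst _ => False
  | TFun n _ args => exists i, i <= n /\ free_in_term z (args i)
  | TG _ k args => exists i, i < k /\ free_in_term z (args i)
  | Tf t1 => free_in_term z t1
  | TEll _ u x v => (free_in_term z u /\ z <> x) \/ free_in_term z v
  end.

Fixpoint free_in (z : var) (phi : formula) : Prop :=
  match phi with
  | FEq t1 t2 => free_in_term z t1 \/ free_in_term z t2
  | FPred n _ args => exists i, i <= n /\ free_in_term z (args i)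
  | FFalse => False
  | FNot a => free_in z a
  | FAnd a b | FOr a b | FImp a b => free_in z a \/ free_in z b
  | FAll x a | FEx x a => free_in z a /\ z <> x
  end.

Definition sentence (phi : formula) : Prop := forall z, ~ free_in z phi.

Fixpoint quantifier_free (phi : formula) : Prop :=
  match phi with
  | FEq _ _ | FPred _ _ _ | FFalse => True
  | FNot a => quantifier_free a
  | FAnd a b | FOr a b | FImp a b => quantifier_free a /\ quantifier_free b
  | FAll _ _ | FEx _ _ => False
  end.

(* M_f |= phi for a sentence (the assignment is irrelevant; we fix one). *)
Definition models (f : nat -> nat) (phi : formula) : Prop := sat f (fun _ => 0) phi.

Definition defines (phi : formula) (S : (nat -> nat) -> Prop) : Prop :=
  sentence phi /\ forall f : nat -> nat, models f phi <-> S f.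

(* Countable (finite or countably infinite, possibly empty). *)
Definition countable (S : (nat -> nat) -> Prop) : Prop :=
  exists e : nat -> (nat -> nat), forall f, S f -> exists n, e n = f.

Definition init_seg (f : nat -> nat) (n : nat) : list nat := map f (seq 0 (S n)).

Definition guesser (G : list nat -> bool) (S : (nat -> nat) -> Prop) : Prop :=
  forall f : nat -> nat, exists m, 0 < m /\
    forall n, m < n -> (G (init_seg f n) = true <-> S f).

Definition guessable (S : (nat -> nat) -> Prop) : Prop :=
  exists G, guesser G S.

(* Main.v *)
Require Import Defs.
From Stdlib Require Import List Arith Lia Classical ClassicalEpsilon FunctionalExtensionality.
Import ListNotations.

Definition agr (g f : nat -> nat) (N : nat) := forall k, k < N -> g k = f k.

Lemma agr_mono g f N N' : agr g f N -> N' <= N -> agr g f N'.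
Proof. unfold agr; intros H Hle k Hk; apply H; lia. Qed.

Lemma unif (m : nat) (Q : nat -> nat -> Prop) :
  (forall i N N', Q i N -> N <= N' -> Q i N') ->
  (forall i, i < m -> exists N, Q i N) -> exists N, forall i, i < m -> Q i N.
Proof.
  intros Hm H; induction m as [|m IH].
  - exists 0; intros; lia.
  - destruct IH as [N1 HN1]. { intros; apply H; lia. }
    destruct (H m ltac:(lia)) as [N2 HN2].
    exists (max N1 N2); intros i Hi.
    destruct (Nat.eq_dec i m).
    + subst; apply (Hm _ N2); auto; lia.
    + apply (Hm _ N1); [apply HN1; lia | lia].
Qed.

Lemma map_seq_ext {A} (F G : nat -> A) k :
  (forall i, i < k -> F i = G i) -> map F (seq 0 k) = map G (seq 0 k).
Proof.
  intros H; apply map_ext_in; intros a Ha; apply in_seq in Ha; apply H; lia.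
Qed.

Lemma eval_fin (t : term) : forall f s, exists N, forall g, agr g f N -> eval g s t = eval f s t.
Proof.
  induction t as [v|c|n w args IH|G k args IH|t1 IH|G u IHu x v IHv]; intros f s.
  - exists 0; reflexivity.
  - exists 0; reflexivity.
  - destruct (unif (S n) (fun i N => forall g, agr g f N -> eval g s (args i) = eval f s (args i)))
      as [N HN].
    + intros i N N' H1 H2 g Hg; apply H1; eapply agr_mono; eauto.
    + intros i _; apply IH.
    + exists N; intros g Hg; cbn [eval]; f_equal; apply map_seq_ext; intros i Hi; apply HN; auto.
  - destruct (unif k (fun i N => forall g, agr g f N -> eval g s (args i) = eval f s (args i)))
      as [N HN].
    + intros i N N' H1 H2 g Hg; apply H1; eapply agr_mono; eauto.
    + intros i _; apply IH.
    + exists N; intros g Hg; cbn [eval]; f_equal; apply map_seq_ext; intros i Hi; apply HN; auto.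
  - destruct (IH f s) as [N HN].
    exists (max N (S (eval f s t1))); intros g Hg; simpl.
    rewrite HN by (eapply agr_mono; eauto; lia). apply Hg; lia.
  - destruct (IHv f s) as [Nv HNv].
    destruct (unif (S (eval f s v)) (fun i N => forall g, agr g f N -> eval g (upd s x i) u = eval f (upd s x i) u))
      as [N HN].
    + intros i N N' H1 H2 g Hg; apply H1; eapply agr_mono; eauto.
    + intros i _; apply IHu.
    + exists (max Nv N); intros g Hg; cbn [eval].
      rewrite HNv by (eapply agr_mono; eauto; lia).
      f_equal; apply map_seq_ext; intros i Hi; apply HN; auto; eapply agr_mono; eauto; lia.
Qed.

Lemma sat_fin (phi : formula) : quantifier_free phi ->
  forall f s, exists N, forall g, agr g f N -> (sat g s phi <-> sat f s phi).
Proof.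
  induction phi as [t1 t2|n p args| |a IH|a IHa b IHb|a IHa b IHb|a IHa b IHb|z a IH|z a IH];
    cbn [sat quantifier_free]; intros Hq f s; try contradiction.
  - destruct (eval_fin t1 f s) as [N1 H1]; destruct (eval_fin t2 f s) as [N2 H2].
    exists (max N1 N2); intros g Hg.
    rewrite H1, H2 by (eapply agr_mono; eauto; lia). tauto.
  - destruct (unif (S n) (fun i N => forall g, agr g f N -> eval g s (args i) = eval f s (args i)))
      as [N HN].
    + intros i N N' H1 H2 g Hg; apply H1; eapply agr_mono; eauto.
    + intros i _; apply eval_fin.
    + exists N; intros g Hg.
      rewrite (map_seq_ext (fun i => eval g s (args i)) (fun i => eval f s (args i)));
        [tauto|]; intros i Hi; apply HN; auto.
  - exists 0; tauto.
  - destruct (IH Hq f s) as [N HN]; exists N; intros g Hg; specialize (HN g Hg); tauto.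
  - destruct Hq as [qa qb]; destruct (IHa qa f s) as [N1 H1]; destruct (IHb qb f s) as [N2 H2].
    exists (max N1 N2); intros g Hg.
    specialize (H1 g ltac:(eapply agr_mono; eauto; lia)).
    specialize (H2 g ltac:(eapply agr_mono; eauto; lia)). tauto.
  - destruct Hq as [qa qb]; destruct (IHa qa f s) as [N1 H1]; destruct (IHb qb f s) as [N2 H2].
    exists (max N1 N2); intros g Hg.
    specialize (H1 g ltac:(eapply agr_mono; eauto; lia)).
    specialize (H2 g ltac:(eapply agr_mono; eauto; lia)). tauto.
  - destruct Hq as [qa qb]; destruct (IHa qa f s) as [N1 H1]; destruct (IHb qb f s) as [N2 H2].
    exists (max N1 N2); intros g Hg.
    specialize (H1 g ltac:(eapply agr_mono; eauto; lia)).
    specialize (H2 g ltac:(eapply agr_mono; eauto; lia)). tauto.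
Qed.

Definition agreeL (g : nat -> nat) (s : list nat) := forall k, k < length s -> g k = nth k s 0.

Lemma agree_init g f n : agreeL g (init_seg f n) <-> agr g f (S n).
Proof.
  unfold agreeL, agr, init_seg. rewrite length_map, length_seq.
  split; intros H k Hk; specialize (H k Hk);
    rewrite (nth_indep _ 0 (f 0)) in * by (rewrite length_map, length_seq; lia);
    rewrite map_nth, seq_nth in * by lia; simpl in *; auto.
Qed.

Theorem lemma4p8 (S : (nat -> nat) -> Prop) (x y : var) (phi : formula) :
  quantifier_free phi ->
  defines (FAll x (FEx y phi)) S ->
  countable S ->
  guessable S.
Proof.
  intros Hq [_ Hdef] [e He].
  set (sg := fun c d => upd (upd (fun _ => 0) x c) y d).
  set (Q := fun s c => exists d, d < length s /\ forall g, agreeL g s -> sat g (sg c d) phi).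
  set (Gd := fun s => exists i, S (e i) /\ agreeL (e i) s /\ forall c, c < i -> Q s c).
  exists (fun s => if excluded_middle_informative (Gd s) then true else false).
  intros f.
  assert (HS : S f <-> forall c, exists d, sat f (sg c d) phi) by (rewrite <- Hdef; reflexivity).
  destruct (classic (S f)) as [Hf | Hf].
  - destruct (He f Hf) as [i Hi].
    destruct (unif i (fun c N => exists d, d < N /\ forall g, agr g f N -> sat g (sg c d) phi))
      as [N HN].
    + intros c N N' [d [Hd H1]] H2; exists d; split; [lia|]; intros g Hg; apply H1; eapply agr_mono; eauto.
    + intros c _. destruct (proj1 HS Hf c) as [d Hd].
      destruct (sat_fin phi Hq f (sg c d)) as [N HN].
      exists (max N (Datatypes.S d)); exists d; split; [lia|]; intros g Hg; apply HN; auto.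
      eapply agr_mono; eauto; lia.
    + exists (Datatypes.S N); split; [lia|]; intros n Hn.
      destruct (excluded_middle_informative (Gd (init_seg f n))) as [_|Hno]; [tauto|].
      exfalso; apply Hno; exists i; split; [congruence|split].
      * rewrite Hi; apply (proj2 (agree_init f f n)); intros k _; reflexivity.
      * intros c Hc; destruct (HN c Hc) as [d [Hd H1]]; exists d.
        split; [unfold init_seg; rewrite length_map, length_seq; lia|].
        intros g Hg; apply H1; pose proof (proj1 (agree_init g f n) Hg) as Hg'; eapply agr_mono; [exact Hg'|lia].
  - assert (Hc0 : exists c0, forall d, ~ sat f (sg c0 d) phi).
    { apply NNPP; intro Hn; apply Hf, HS; intro c; apply NNPP; intro Hc; apply Hn; exists c.
      intros d Hd; apply Hc; eauto. }
    destruct Hc0 as [c0 Hc0].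
    destruct (unif (Datatypes.S c0) (fun i N => S (e i) -> exists k, k < N /\ e i k <> f k)) as [N HN].
    + intros i N N' H1 H2 H3; destruct (H1 H3) as [k [Hk Hk']]; exists k; split; auto; lia.
    + intros i _. destruct (classic (S (e i))) as [Hs|Hs].
      * assert (e i <> f) by (intro; subst; congruence).
        destruct (classic (exists k, e i k <> f k)) as [[k Hk]|Hk].
        -- exists (Datatypes.S k); intros _; exists k; split; auto.
        -- exfalso; apply H; apply functional_extensionality; intro k; apply NNPP; eauto.
      * exists 0; tauto.
    + exists (Datatypes.S N); split; [lia|]; intros n Hn.
      destruct (excluded_middle_informative (Gd (init_seg f n))) as [Hg|_]; [|split; [discriminate|tauto]].
      exfalso; destruct Hg as [i [Hsi [Hag Hqi]]].
      destruct (le_lt_dec i c0) as [Hle|Hlt].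
      * destruct (HN i ltac:(lia) Hsi) as [k [Hk Hk']].
        pose proof (proj1 (agree_init _ f n) Hag) as Hag'; apply Hk', Hag'; lia.
      * destruct (Hqi c0 Hlt) as [d [_ Hd]]. apply (Hc0 d), Hd.
        apply (proj2 (agree_init f f n)); intros k _; reflexivity.
Qed.
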